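(* Let $h>0$, $n\in\mathbb{N}$, and let $\lambda:\mathbb{T}\to\mathbb{R}$ be an $n$-cycle with values $\lambda_0,\dots,\lambda_{n-1}\in\mathbb{R}\setminus\{\pm\tfrac1h\}$, such that $0<|e_{\lambda}(nh)|\neq1$ and $0<|e_{-\lambda}(nh)|\neq1$. Define for $t\in\mathbb{T}$ $$p(t)=-\lambda(t+2h),\quad q(t)=-2\Delta_h\lambda(t+h)+\Delta_h\lambda(t+2h)-\lambda(t+2h)\lambda(t+3h),$$ $$r(t)=-\Delta_h^2\lambda(t)-\lambda(t)\Delta_h\lambda(t+2h)+\lambda(t)\lambda(t+2h)\lambda(t+3h).$$ Then the third-order equation $$\Delta_h^3y(t)+p(t)\Delta_h^2y(t)+q(t)\Delta_h y(t)+r(t)y(t)=0,\qquad t\in\mathbb{T},$$ has Hyers–Ulam stability on $\mathbb{T}$ with Hyers–Ulam stability constant $K=\bigl(K_0(\lambda)\bigr)^2K_0(-\lambda)$.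
   Context: Fix $h>0$ and let $\mathbb{T}=\{0,h,2h,3h,\dots\}$. For $x:\mathbb{T}\to\mathbb{R}$, $\Delta_h x(t)=\frac{x(t+h)-x(t)}{h}$ and $\Delta_h^2x=\Delta_h(\Delta_h x)$, $\Delta_h^3x=\Delta_h(\Delta_h^2 x)$. An $n$-cycle is a function $\mu:\mathbb{T}\to\mathbb{R}$ with $\mu(t)=\mu_k$ whenever $t/h\equiv k\pmod n$, $k\in\{0,\dots,n-1\}$, which has period $n$ and no smaller period. For such $\mu$ define the discrete exponential $e_\mu(t)=\prod_{k=0}^{t/h-1}(1+h\mu(kh))$ (empty product $=1$), so $e_\mu(nh)=\prod_{k=0}^{n-1}(1+h\mu_k)$. For $k\in\{0,\dots,n-1\}$ define $$S_k(\mu)=\sum_{j=1}^{n}\prod_{i=0}^{j-1}\frac{1}{|1+h\mu_{(k+i)\bmod n}|},$$ (e.g. $S_0(\mu)=\frac{1}{|1+h\mu_0|}+\frac{1}{|1+h\mu_0||1+h\mu_1|}+\dots+\frac{1}{|1+h\mu_0|\cdots|1+h\mu_{n-1}|}$), and, when $0<|e_\mu(nh)|\neq1$, $$K_0(\mu)=\frac{h|e_\mu(nh)|}{\bigl|1-|e_\mu(nh)|\bigr|}\max\{S_0(\mu),\dots,S_{n-1}(\mu)\}.$$ Here $-\lambda$ denotes the $n$-cycle with values $-\lambda_0,\dots,-\lambda_{n-1}$. Hyers–Ulam stability: an equation $\mathcal{L}[y](t)=f(t)$, $t\in\mathbb{T}$ (with $\mathcal{L}$ a linear difference operator) has Hyers–Ulam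 stability on $\mathbb{T}$ with Hyers–Ulam stability constant $K>0$ if for every $\varepsilon>0$ and every $\xi:\mathbb{T}\to\mathbb{R}$ with $|\mathcal{L}[\xi](t)-f(t)|\le\varepsilon$ for all $t\in\mathbb{T}$, there is a solution $y:\mathbb{T}\to\mathbb{R}$ of the equation with $|\xi(t)-y(t)|\le K\varepsilon$ for all $t\in\mathbb{T}$. The minimum Hyers–Ulam stability constant is the smallest such $K$. *)

(* Defs.v *)
(* concrete reals R. A function x : T -> R on T = {0,h,2h,...}
   is represented by x : nat -> R with x k standing for x(k h). *)
From Stdlib Require Import Reals Lra Lia List.
Open Scope R_scope.

Definition dh (h : R) (x : nat -> R) (k : nat) : R := (x (S k) - x k) / h.

Definition is_cycle (n : nat) (mu : nat -> R) : Prop :=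
  (0 < n)%nat /\
  (forall k, mu (k + n)%nat = mu k) /\
  (forall m, (0 < m < n)%nat -> exists k, mu (k + m)%nat <> mu k).

Fixpoint dexp (h : R) (mu : nat -> R) (k : nat) : R :=
  match k with
  | O => 1
  | S k' => dexp h mu k' * (1 + h * mu k')
  end.

Fixpoint invprod (h : R) (n : nat) (mu : nat -> R) (k j : nat) : R :=
  match j with
  | O => 1
  | S j' => invprod h n mu k j' * (1 / Rabs (1 + h * mu ((k + j') mod n)%nat))
  end.

Definition Sk (h : R) (n : nat) (mu : nat -> R) (k : nat) : R :=
  fold_right (fun j acc => invprod h n mu k j + acc) 0 (seq 1 n).

Definition K0 (h : R) (n : nat) (mu : nat -> R) : R :=
  h * Rabs (dexp h mu n) / Rabs (1 - Rabs (dexp h mu n)) *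
  fold_right Rmax 0 (map (Sk h n mu) (seq 0 n)).

Definition negc (mu : nat -> R) : nat -> R := fun k => - mu k.

Definition HU_stable (L : (nat -> R) -> nat -> R) (K : R) : Prop :=
  0 < K /\
  forall eps : R, 0 < eps ->
  forall xi : nat -> R, (forall t, Rabs (L xi t) <= eps) ->
  exists y : nat -> R, (forall t, L y t = 0) /\
    (forall t, Rabs (xi t - y t) <= K * eps).

Definition pc (lam : nat -> R) (k : nat) : R := - lam (k + 2)%nat.
Definition qc (h : R) (lam : nat -> R) (k : nat) : R :=
  - 2 * dh h lam (k + 1)%nat + dh h lam (k + 2)%nat
  - lam (k + 2)%nat * lam (k + 3)%nat.
Definition rc (h : R) (lam : nat -> R) (k : nat) : R :=
  - dh h (dh h lam) k - lam k * dh h lam (k + 2)%nat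
  + lam k * lam (k + 2)%nat * lam (k + 3)%nat.

Definition L3 (h : R) (lam : nat -> R) (y : nat -> R) (k : nat) : R :=
  dh h (dh h (dh h y)) k + pc lam k * dh h (dh h y) k
  + qc h lam k * dh h y k + rc h lam k * y k.

(* Main.v *)
Require Import Defs.
From Stdlib Require Import Reals Lra Lia List Arith FunctionalExtensionality.
Open Scope R_scope.

Fixpoint Pa (al : nat -> R) (k m : nat) : R :=
  match m with O => 1 | S m' => Pa al k m' * Rabs (al (k + m')%nat) end.
Fixpoint Tt (al : nat -> R) (k m : nat) : R :=
  match m with O => 0 | S m' => Tt al k m' + / Pa al k (S m') end.
Fixpoint Vv (al : nat -> R) (k m : nat) : R :=
  match m with O => 0 | S m' => Rabs (al (k + m')%nat) * Vv al k m' + 1 end.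

Section Comb.
Variable al : nat -> R.
Hypothesis alnz : forall k, al k <> 0.

Lemma Pa_pos k m : 0 < Pa al k m.
Proof.
  induction m; simpl. lra. apply Rmult_lt_0_compat; auto. apply Rabs_pos_lt; auto.
Qed.

Lemma Pa_cat k a b : Pa al k (a + b) = Pa al k a * Pa al (k + a) b.
Proof.
  induction b; simpl. rewrite Nat.add_0_r; ring.
  rewrite Nat.add_succ_r; simpl. rewrite IHb. replace (k + (a + b))%nat with (k + a + b)%nat by lia. ring.
Qed.

Lemma Tt_pos k m : 0 <= Tt al k m.
Proof.
  induction m; cbn [Tt]. lra. pose proof (Pa_pos k (S m)). assert (0 < / Pa al k (S m)) by (apply Rinv_0_lt_compat; auto). lra.
Qed.

Lemma Vv_pos k m : 0 <= Vv al k m.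
Proof.
  induction m; simpl. lra. pose proof (Rabs_pos (al (k+m)%nat)). nra.
Qed.

Lemma Tt_mono k a b : (a <= b)%nat -> Tt al k a <= Tt al k b.
Proof.
  induction 1. lra. cbn [Tt]. pose proof (Pa_pos k (S m)). assert (0 < / Pa al k (S m)) by (apply Rinv_0_lt_compat; auto). lra.
Qed.

Lemma Vv_Pa_Tt k m : Vv al k m = Pa al k m * Tt al k m.
Proof.
  induction m; simpl. ring. rewrite IHm. pose proof (Pa_pos k m). pose proof (Rabs_pos_lt _ (alnz (k+m)%nat)).
  field. lra.
Qed.

Lemma Vv_cat s d m : Vv al s (d + m) = Pa al (s + d) m * Vv al s d + Vv al (s + d) m.
Proof.
  induction m; simpl. rewrite Nat.add_0_r; ring.
  rewrite Nat.add_succ_r; simpl. rewrite IHm. replace (s + (d + m))%nat with (s + d + m)%nat by lia. ring.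
Qed.

Lemma Tt_cat k a b : Tt al k (a + b) = Tt al k a + Tt al (k + a) b / Pa al k a.
Proof.
  induction b; simpl. rewrite Nat.add_0_r. unfold Rdiv; ring.
  rewrite Nat.add_succ_r; simpl. rewrite IHb. rewrite Pa_cat.
  replace (k + (a + b))%nat with (k + a + b)%nat by lia.
  pose proof (Pa_pos k a). pose proof (Pa_pos (k+a) b). pose proof (Rabs_pos_lt _ (alnz (k+a+b)%nat)).
  field. repeat split; lra.
Qed.

Variable n : nat.
Hypothesis alper : forall k, al (k + n)%nat = al k.

Lemma Pa_per k m : Pa al (k + n) m = Pa al k m.
Proof.
  induction m; simpl; auto. rewrite IHm. replace (k + n + m)%nat with (k + m + n)%nat by lia. rewrite alper; auto.
Qed.
Lemma Tt_per k m : Tt al (k + n) m = Tt al k m.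
Proof.
  induction m; simpl; auto. rewrite IHm. replace (Pa al (k+n) m * Rabs (al (k + n + m)%nat)) with (Pa al (k+n) (S m)) by reflexivity.
  rewrite Pa_per. auto.
Qed.
Lemma Vv_per k m : Vv al (k + n) m = Vv al k m.
Proof.
  induction m; simpl; auto. rewrite IHm. replace (k + n + m)%nat with (k + m + n)%nat by lia. rewrite alper; auto.
Qed.

Lemma Pa_const k : Pa al k n = Pa al 0 n.
Proof.
  induction k; auto. rewrite <- IHk.
  pose proof (Pa_cat k 1 n). pose proof (Pa_cat k n 1). rewrite Nat.add_comm in H0. rewrite H0 in H.
  simpl in H. rewrite !Nat.add_0_r in H. rewrite alper in H. replace (k+1)%nat with (S k) in H by lia.
  pose proof (Rabs_pos_lt _ (alnz k)). apply (Rmult_eq_reg_r (Rabs (al k))). lra. lra.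
Qed.

End Comb.

Section Bounds.
Variable al : nat -> R.
Hypothesis alnz : forall k, al k <> 0.
Variable n : nat.
Hypothesis npos : (0 < n)%nat.
Hypothesis alper : forall k, al (k + n)%nat = al k.
Variable M : R.
Hypothesis HM : forall k, Tt al k n <= M.

Lemma M_nonneg : 0 <= M.
Proof. pose proof (Tt_pos al alnz 0 n). pose proof (HM 0). lra. Qed.

Lemma Tt_bound : 1 < Pa al 0 n -> forall N k, Tt al k N <= M * Pa al 0 n / (Pa al 0 n - 1).
Proof.
  intros HE. set (E := Pa al 0 n) in *. set (B := M * E / (E - 1)).
  assert (HB1 : M <= B). { unfold B. pose proof M_nonneg. apply (Rmult_le_reg_r (E-1)). lra.
    unfold Rdiv. rewrite Rmult_assoc, Rinv_l by lra. nra. }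
  assert (HB2 : M + B / E = B). { unfold B. field. lra. }
  assert (forall N N', (N' <= N)%nat -> forall k, Tt al k N' <= B).
  { induction N; intros N' HN' k.
    - assert (N' = 0%nat) by lia. subst. simpl. pose proof M_nonneg. lra.
    - destruct (le_lt_dec N' n).
      + apply Rle_trans with (Tt al k n). apply Tt_mono; auto. pose proof (HM k). lra.
      + replace N' with (n + (N' - n))%nat by lia. rewrite Tt_cat by auto.
        rewrite Pa_const by auto. fold E.
        assert (Tt al (k + n) (N' - n) <= B) by (apply IHN; lia).
        pose proof (HM k). assert (0 < E) by lra.
        assert (Tt al (k + n) (N' - n) / E <= B / E) by (apply Rmult_le_compat_r; [apply Rlt_le, Rinv_0_lt_compat; lra | lra]).
        lra. }
  intros N k. apply (H N N); lia.
Qed.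

Lemma Vv_bound : Pa al 0 n < 1 -> forall m s, Vv al s m <= Pa al 0 n * M / (1 - Pa al 0 n).
Proof.
  intros HE. pose proof (Pa_pos al alnz 0 n) as HE0.
  set (E := Pa al 0 n) in *. set (B := E * M / (1 - E)).
  assert (HW : forall s, Vv al s n <= E * M).
  { intro s. rewrite Vv_Pa_Tt by auto. rewrite Pa_const by auto. fold E. pose proof (HM s).
    apply Rmult_le_compat_l; lra. }
  assert (HB1 : E * M <= B). { pose proof M_nonneg. apply (Rmult_le_reg_r (1-E)). lra.
    replace (B * (1 - E)) with (E * M) by (unfold B; field; lra). nra. }
  assert (HB2 : E * B + E * M = B). { unfold B. field. lra. }
  assert (forall m m', (m' <= m)%nat -> forall s, Vv al s m' <= B).
  { induction m; intros m' Hm' s.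
    - assert (m' = 0%nat) by lia. subst. simpl. pose proof M_nonneg. nra.
    - destruct (le_lt_dec m' n).
      + rewrite <- (Vv_per al n alper s).
        pose proof (Vv_cat al (s + m') (n - m') m') as Hc.
        replace (n - m' + m')%nat with n in Hc by lia.
        replace (s + m' + (n - m'))%nat with (s + n)%nat in Hc by lia.
        pose proof (Pa_pos al alnz (s+n) m'). pose proof (Vv_pos al (s+m') (n-m')).
        pose proof (HW (s+m')%nat). nra.
      + replace m' with ((m' - n) + n)%nat by lia. rewrite Vv_cat.
        rewrite Pa_const by auto. fold E.
        assert (Vv al s (m' - n) <= B) by (apply IHm; lia).
        pose proof (HW (s + (m'-n))%nat). nra. }
  intros m s. apply (H m m); lia.
Qed.
End Bounds.

Fixpoint ps (al : nat -> R) (m : nat) : R :=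
  match m with O => 1 | S m' => ps al m' * al m' end.
Fixpoint zz (al : nat -> R) (h : R) (e : nat -> R) (c : R) (k : nat) : R :=
  match k with O => c | S k' => al k' * zz al h e c k' + h * e k' end.
Fixpoint sg (u : nat -> R) (N : nat) : R :=
  match N with O => 0 | S N' => sg u N' + u N' end.

Lemma lim_le U l a D k : Un_cv U l -> (forall N, (N >= k)%nat -> Rabs (U N - a) <= D) -> Rabs (l - a) <= D.
Proof.
  intros Hc HU. destruct (Rle_lt_dec (Rabs (l - a)) D) as [|Hlt]; auto. exfalso.
  destruct (Hc (Rabs (l - a) - D)) as [N HN]. lra.
  specialize (HN (max N k) ltac:(lia)). specialize (HU (max N k) ltac:(lia)).
  unfold Rdist in HN. pose proof (Rabs_triang (l - U (max N k)) (U (max N k) - a)).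
  replace (l - U (max N k) + (U (max N k) - a)) with (l - a) in H by ring.
  rewrite Rabs_minus_sym in HN. lra.
Qed.

Lemma sg_abs u N M : (N <= M)%nat -> Rabs (sg u M - sg u N) <= sg (fun j => Rabs (u j)) M - sg (fun j => Rabs (u j)) N.
Proof.
  induction 1. rewrite !Rminus_diag, Rabs_R0. lra.
  simpl. replace (sg u m + u m - sg u N) with ((sg u m - sg u N) + u m) by ring.
  pose proof (Rabs_triang (sg u m - sg u N) (u m)). lra.
Qed.

Section Core.
Variable al : nat -> R.
Hypothesis alnz : forall k, al k <> 0.
Variable n : nat.
Hypothesis npos : (0 < n)%nat.
Hypothesis alper : forall k, al (k + n)%nat = al k.
Variable M : R.
Hypothesis HM : forall k, Tt al k n <= M.
Variable h : R.
Hypothesis hpos : 0 < h.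
Variable e : nat -> R.
Variable eps : R.
Hypothesis He : forall k, Rabs (e k) <= eps.
Hypothesis HE1 : Pa al 0 n <> 1.

Lemma ps_abs m : Rabs (ps al m) = Pa al 0 m.
Proof. induction m; simpl. apply Rabs_R1. rewrite Rabs_mult, IHm. auto. Qed.

Lemma ps_nz m : ps al m <> 0.
Proof. intro H. pose proof (ps_abs m). rewrite H, Rabs_R0 in H0. pose proof (Pa_pos al alnz 0 m). lra. Qed.

Let u := fun j => e j / ps al (S j).

Lemma zz_closed c k : zz al h e c k = ps al k * (c + h * sg u k).
Proof.
  induction k; simpl. ring. rewrite IHk. unfold u; cbv beta. simpl ps. pose proof (ps_nz k). pose proof (alnz k). field. auto.
Qed.

Lemma tail k N : Rabs (ps al k) * (sg (fun j => Rabs (u j)) (k + N) - sg (fun j => Rabs (u j)) k) <= eps * Tt al k N.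
Proof.
  induction N; simpl.
  - rewrite Nat.add_0_r, Rminus_diag. lra.
  - rewrite Nat.add_succ_r. simpl.
    replace (Rabs (ps al k) * (sg (fun j : nat => Rabs (u j)) (k + N) + Rabs (u (k + N)%nat) - sg (fun j : nat => Rabs (u j)) k))
      with (Rabs (ps al k) * (sg (fun j : nat => Rabs (u j)) (k + N) - sg (fun j : nat => Rabs (u j)) k) + Rabs (ps al k) * Rabs (u (k+N)%nat)) by ring.
    assert (Rabs (ps al k) * Rabs (u (k + N)%nat) <= eps * / (Pa al k N * Rabs (al (k + N)%nat))).
    { unfold u; cbv beta. unfold Rdiv. rewrite Rabs_mult, Rabs_inv, ps_abs, ps_abs. change (Pa al 0 (S (k+N))) with (Pa al 0 (k+N) * Rabs (al (0 + (k+N))%nat)).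
      rewrite Pa_cat. simpl Nat.add.
      pose proof (Pa_pos al alnz 0 k). pose proof (Pa_pos al alnz k N). pose proof (Rabs_pos_lt _ (alnz (k+N)%nat)).
      pose proof (He (k+N)%nat).
      replace (Pa al 0 k * (Rabs (e (k + N)%nat) * / (Pa al 0 k * Pa al k N * Rabs (al (k + N)%nat))))
        with (Rabs (e (k + N)%nat) * / (Pa al k N * Rabs (al (k + N)%nat))) by (field; lra).
      apply Rmult_le_compat_r; auto. apply Rlt_le, Rinv_0_lt_compat. nra. }
    lra.
Qed.

Lemma core : exists c, forall k, Rabs (zz al h e c k) <= h * Pa al 0 n / Rabs (1 - Pa al 0 n) * M * eps.
Proof.
  assert (Heps : 0 <= eps) by (pose proof (He 0); pose proof (Rabs_pos (e 0)); lra).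
  pose proof (M_nonneg al alnz n M HM) as HM0.
  pose proof (Pa_pos al alnz 0 n) as HE0.
  destruct (Rlt_or_le (Pa al 0 n) 1) as [Hlt | Hge].
  - exists 0. intro k.
    assert (Hz : Rabs (zz al h e 0 k) <= h * eps * Vv al 0 k).
    { induction k; simpl. rewrite Rabs_R0. lra.
      pose proof (Rabs_triang (al k * zz al h e 0 k) (h * e k)).
      rewrite Rabs_mult in H. rewrite (Rabs_mult h), (Rabs_right h) in H by lra.
      pose proof (He k). pose proof (Rabs_pos (al k)).
      assert (Rabs (al k) * Rabs (zz al h e 0 k) <= Rabs (al k) * (h * eps * Vv al 0 k)) by (apply Rmult_le_compat_l; lra).
      assert (h * Rabs (e k) <= h * eps) by (apply Rmult_le_compat_l; lra).
      nra. }
    pose proof (Vv_bound al alnz n npos alper M HM Hlt k 0).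
    rewrite (Rabs_right (1 - Pa al 0 n)) by lra.
    apply Rle_trans with (h * eps * (Pa al 0 n * M / (1 - Pa al 0 n))); auto.
    apply Rle_trans with (h * eps * Vv al 0 k); auto. apply Rmult_le_compat_l. nra. auto.
    right. field. lra.
  - assert (Hgt : 1 < Pa al 0 n) by (destruct Hge; auto; congruence).
    set (B := M * Pa al 0 n / (Pa al 0 n - 1)).
    pose proof (Tt_bound al alnz n npos alper M HM Hgt) as HT.
    set (au := fun j => Rabs (u j)).
    assert (Htau : forall k N, Rabs (ps al k) * (sg au (k + N) - sg au k) <= eps * B).
    { intros. pose proof (tail k N). pose proof (HT N k). fold B in H0. fold au in H.
      apply Rle_trans with (eps * Tt al k N); auto. apply Rmult_le_compat_l; auto. }
    assert (Hcv : {l | Un_cv (sg au) l}).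
    { apply growing_cv.
      - intro N. simpl. unfold au. pose proof (Rabs_pos (u N)). lra.
      - exists (eps * B). intros x [i ->]. pose proof (Htau 0%nat i). simpl in H.
        rewrite Rabs_R1 in H. lra. }
    assert (Hcs : {l | Un_cv (sg u) l}).
    { apply R_complete. pose proof (CV_Cauchy _ Hcv) as Hc. intros ep Hep.
      destruct (Hc ep Hep) as [N HN]. exists N. intros a b Ha Hb.
      specialize (HN a b Ha Hb). unfold Rdist in *.
      destruct (le_lt_dec a b).
      - pose proof (sg_abs u a b l). rewrite Rabs_minus_sym. fold au in H.
        assert (sg au b - sg au a <= Rabs (sg au a - sg au b)) by (rewrite Rabs_minus_sym; apply Rle_abs). lra.
      - pose proof (sg_abs u b a ltac:(lia)). fold au in H.
        assert (sg au a - sg au b <= Rabs (sg au a - sg au b)) by apply Rle_abs. lra. }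
    destruct Hcs as [L HL].
    exists (- h * L). intro k. rewrite zz_closed.
    replace (ps al k * (- h * L + h * sg u k)) with (- h * (ps al k * (L - sg u k))) by ring.
    rewrite Rabs_mult, Rabs_Ropp, (Rabs_right h) by lra. rewrite Rabs_mult.
    assert (Rabs (L - sg u k) <= eps * B / Rabs (ps al k)).
    { apply (lim_le (sg u) L (sg u k) _ k HL). intros N HN.
      replace N with (k + (N - k))%nat by lia.
      pose proof (sg_abs u k (k + (N - k)) ltac:(lia)). fold au in H.
      pose proof (Htau k (N - k)%nat). pose proof (Pa_pos al alnz 0 k). rewrite <- ps_abs in H1.
      apply (Rmult_le_reg_l (Rabs (ps al k))); auto.
      replace (Rabs (ps al k) * (eps * B / Rabs (ps al k))) with (eps * B) by (field; lra).
      apply Rle_trans with (Rabs (ps al k) * (sg au (k + (N - k)) - sg au k)); auto.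
      apply Rmult_le_compat_l; auto. lra. }
    pose proof (Pa_pos al alnz 0 k). rewrite <- ps_abs in H0.
    assert (Rabs (ps al k) * Rabs (L - sg u k) <= eps * B).
    { apply Rle_trans with (Rabs (ps al k) * (eps * B / Rabs (ps al k))). apply Rmult_le_compat_l; lra.
      right. field. lra. }
    rewrite (Rabs_left1 (1 - Pa al 0 n)) by lra.
    replace (h * Pa al 0 n / - (1 - Pa al 0 n) * M * eps) with (h * (eps * B)) by (unfold B; field; lra).
    apply Rmult_le_compat_l; lra.
Qed.
End Core.

Lemma Pa_shift al s k m : Pa (fun j => al (j + s)%nat) k m = Pa al (k + s) m.
Proof. induction m; simpl; auto. rewrite IHm. do 3 f_equal. lia. Qed.
Lemma Tt_shift al s k m : Tt (fun j => al (j + s)%nat) k m = Tt al (k + s) m.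
Proof. induction m; cbn [Tt]; auto. rewrite IHm. rewrite Pa_shift. auto. Qed.

Lemma fold_sum_acc (F : nat -> R) a l :
  fold_right (fun j acc => F j + acc) a l = fold_right (fun j acc => F j + acc) 0 l + a.
Proof. induction l; simpl. ring. rewrite IHl. ring. Qed.

Lemma fold_max_ge x l : In x l -> x <= fold_right Rmax 0 l.
Proof. induction l; simpl; intros H. contradiction. destruct H as [->|H].
  apply Rmax_l. eapply Rle_trans. apply IHl; auto. apply Rmax_r. Qed.

Section FO.
Variable h : R.
Hypothesis hpos : 0 < h.
Variable n : nat.
Hypothesis npos : (0 < n)%nat.
Variable nu : nat -> R.
Hypothesis nuper : forall k, nu (k + n)%nat = nu k.
Hypothesis nunz : forall k, 1 + h * nu k <> 0.

Let al0 := fun k => 1 + h * nu k.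

Lemma nu_perq q r : nu (r + q * n)%nat = nu r.
Proof. induction q; simpl. rewrite Nat.add_0_r; auto.
  replace (r + (n + q * n))%nat with (r + q * n + n)%nat by lia. rewrite nuper; auto. Qed.
Lemma nu_mod m : nu (m mod n) = nu m.
Proof. pose proof (Nat.div_mod_eq m n). rewrite H at 2. rewrite Nat.add_comm, Nat.mul_comm. rewrite nu_perq. auto. Qed.

Lemma al0per k : al0 (k + n)%nat = al0 k.
Proof. unfold al0. rewrite nuper; auto. Qed.

Lemma Pa_dexp m : Pa al0 0 m = Rabs (dexp h nu m).
Proof. induction m; simpl. rewrite Rabs_R1; auto. rewrite IHm, Rabs_mult. auto. Qed.

Lemma invprod_Pa K j : invprod h n nu (K mod n) j = / Pa al0 K j.
Proof.
  induction j; simpl. rewrite Rinv_1; auto. rewrite IHj, Rinv_mult.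
  unfold al0. rewrite Nat.Div0.add_mod_idemp_l, nu_mod. unfold Rdiv; ring.
Qed.

Lemma Tt_fold K m : Tt al0 K m = fold_right (fun j acc => invprod h n nu (K mod n) j + acc) 0 (seq 1 m).
Proof.
  induction m. auto.
  rewrite seq_S, fold_right_app. simpl fold_right at 2. rewrite fold_sum_acc.
  cbn [Tt]. rewrite IHm. replace (1 + m)%nat with (S m) by lia. rewrite Rplus_0_r. f_equal. rewrite <- (invprod_Pa K (S m)). reflexivity.
Qed.
Lemma Tt_Sk K : Tt al0 K n = Sk h n nu (K mod n).
Proof. unfold Sk. apply Tt_fold. Qed.

Let M := fold_right Rmax 0 (map (Sk h n nu) (seq 0 n)).

Lemma HMb K : Tt al0 K n <= M.
Proof. rewrite Tt_Sk. apply fold_max_ge. apply in_map. apply in_seq. pose proof (Nat.mod_upper_bound K n). lia. Qed.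

Hypothesis Hdx : Rabs (dexp h nu n) <> 1.

Lemma fo (s : nat) (g x : nat -> R) eps :
  (forall k, Rabs (dh h x k - nu (k + s)%nat * x k - g k) <= eps) ->
  exists y, (forall k, dh h y k - nu (k + s)%nat * y k = g k) /\
            (forall k, Rabs (x k - y k) <= K0 h n nu * eps).
Proof.
  intros Hx.
  set (al := fun k => al0 (k + s)%nat).
  assert (alnz : forall k, al k <> 0) by (intro; apply nunz).
  assert (alper : forall k, al (k + n)%nat = al k).
  { intro k. unfold al. replace (k + n + s)%nat with (k + s + n)%nat by lia. apply al0per. }
  assert (HPa : Pa al 0 n = Rabs (dexp h nu n)).
  { unfold al. rewrite Pa_shift. rewrite Pa_const. apply Pa_dexp. intro; apply nunz. apply al0per. }
  assert (HM : forall k, Tt al k n <= M). { intro k. unfold al. rewrite Tt_shift. apply HMb. }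
  set (e := fun k => dh h x k - nu (k + s)%nat * x k - g k).
  destruct (core al alnz n npos alper M HM h hpos e eps Hx) as [c Hc].
  { rewrite HPa; auto. }
  exists (fun k => x k - zz al h e c k). split.
  - intro k. unfold dh. simpl zz. unfold e, dh, al, al0. field. lra.
  - intro k. replace (x k - (x k - zz al h e c k)) with (zz al h e c k) by ring.
    specialize (Hc k). rewrite HPa in Hc. unfold K0. fold M. auto.
Qed.

Lemma K0_pos : 0 < Rabs (dexp h nu n) -> 0 < K0 h n nu.
Proof.
  intro Hd. unfold K0. fold M.
  assert (0 < M).
  { apply Rlt_le_trans with (Tt al0 0 n). 2: apply HMb.
    apply Rlt_le_trans with (Tt al0 0 1). cbn [Tt]. rewrite Rplus_0_l. apply Rinv_0_lt_compat. apply Pa_pos. apply nunz.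
    apply Tt_mono. apply nunz. lia. }
  assert (0 < Rabs (1 - Rabs (dexp h nu n))) by (apply Rabs_pos_lt; lra).
  apply Rmult_lt_0_compat; auto. unfold Rdiv. apply Rmult_lt_0_compat. nra. apply Rinv_0_lt_compat; auto.
Qed.
End FO.

Lemma L3_fact h lam y k : h <> 0 ->
  L3 h lam y k =
  dh h (fun k => dh h (fun k => dh h y k - lam (k + 0)%nat * y k) k
                 - negc lam (k + 2)%nat * (dh h y k - lam (k + 0)%nat * y k)) k
  - lam (k + 3)%nat * (dh h (fun k => dh h y k - lam (k + 0)%nat * y k) k
                 - negc lam (k + 2)%nat * (dh h y k - lam (k + 0)%nat * y k)).
Proof.
  intro Hh. unfold L3, pc, qc, rc, negc, dh.
  replace (k + 0)%nat with k by lia.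
  replace (S k + 0)%nat with (S k) by lia.
  replace (S (S k) + 0)%nat with (S (S k)) by lia.
  replace (k + 1)%nat with (S k) by lia.
  replace (k + 2)%nat with (S (S k)) by lia.
  replace (S k + 2)%nat with (S (S (S k))) by lia.
  replace (k + 3)%nat with (S (S (S k))) by lia.
  replace (S k + 1)%nat with (S (S k)) by lia.
  replace (S k + 3)%nat with (S (S (S (S k)))) by lia.
  replace (S (S k) + 2)%nat with (S (S (S (S k)))) by lia.
  field. auto.
Qed.

Theorem theorem5p3 (h : R) (n : nat) (lam : nat -> R) :
  0 < h ->
  is_cycle n lam ->
  (forall k, lam k <> 1 / h /\ lam k <> - (1 / h)) ->
  0 < Rabs (dexp h lam n) -> Rabs (dexp h lam n) <> 1 ->
  0 < Rabs (dexp h (negc lam) n) -> Rabs (dexp h (negc lam) n) <> 1 ->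
  HU_stable (L3 h lam) (K0 h n lam ^ 2 * K0 h n (negc lam)).
Proof.
  intros hpos [npos [per _]] Hl Hd1 Hd2 Hd3 Hd4.
  assert (nz1 : forall k, 1 + h * lam k <> 0).
  { intros k Heq. apply (proj2 (Hl k)). apply (Rmult_eq_reg_l h); [| lra].
    replace (h * -(1/h)) with (-1) by (field; lra). lra. }
  assert (nz2 : forall k, 1 + h * negc lam k <> 0).
  { intros k Heq. unfold negc in Heq. apply (proj1 (Hl k)). apply (Rmult_eq_reg_l h); [| lra].
    replace (h * (1/h)) with 1 by (field; lra). lra. }
  assert (per2 : forall k, negc lam (k + n)%nat = negc lam k) by (intro; unfold negc; rewrite per; auto).
  pose proof (K0_pos h hpos n npos lam per nz1 Hd2 Hd1) as Ka.
  pose proof (K0_pos h hpos n npos (negc lam) per2 nz2 Hd4 Hd3) as Kb.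
  split. { apply Rmult_lt_0_compat; auto. apply pow_lt; auto. }
  intros eps Heps xi Hxi.
  set (V := fun k => dh h xi k - lam (k + 0)%nat * xi k).
  set (W := fun k => dh h V k - negc lam (k + 2)%nat * V k).
  destruct (fo h hpos n npos lam per nz1 Hd2 3 (fun _ => 0) W eps) as [ws [Hw1 Hw2]].
  { intro k. rewrite Rminus_0_r. specialize (Hxi k). rewrite L3_fact in Hxi by lra. exact Hxi. }
  destruct (fo h hpos n npos (negc lam) per2 nz2 Hd4 2 ws V (K0 h n lam * eps)) as [vs [Hv1 Hv2]].
  { intro k. exact (Hw2 k). }
  destruct (fo h hpos n npos lam per nz1 Hd2 0 vs xi (K0 h n (negc lam) * (K0 h n lam * eps))) as [y [Hy1 Hy2]].
  { intro k. exact (Hv2 k). }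
  exists y. split.
  - intro t. rewrite L3_fact by lra.
    assert (Ev : (fun k => dh h y k - lam (k + 0)%nat * y k) = vs) by (apply functional_extensionality; auto).
    rewrite Ev.
    assert (Ew : (fun k => dh h vs k - negc lam (k + 2)%nat * vs k) = ws) by (apply functional_extensionality; auto).
    assert (forall k, dh h y k - lam (k + 0)%nat * y k = vs k) by auto.
    assert (Ew2 : (fun k => dh h vs k - negc lam (k + 2)%nat * (dh h y k - lam (k + 0)%nat * y k)) = ws).
    { apply functional_extensionality. intro k. rewrite H. apply Hv1. }
    rewrite Ew2. rewrite H, (Hv1 t). apply Hw1.
  - intro t. eapply Rle_trans. apply Hy2. right. ring.
Qed.
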